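(* Let $\mathcal I=\{x_0,x_1,x_2,\ldots\}$ be the standard infinite generating set of Thompson's group $F$ and let $T_1,T_2$ be finite rooted binary trees each with $n$ nodes. Then $d_{RA}(T_1,T_2)=|(T_1,T_2)|_{\mathcal I}$, where $|(T_1,T_2)|_{\mathcal I}$ is the word length, with respect to $\mathcal I$, of the element of $F$ represented by the tree pair diagram $(T_1,T_2)$.
   Context: Trees: finite rooted binary trees, each internal vertex (node) having a left and a right child; a tree with $n$ nodes has $n+1$ leaves numbered $0,\ldots,n$ from left to right. The right arm consists of the root and all nodes reachable from it by right edges only. Right rotation at a node $N$ whose left child $M$ is a node (with $A,B$ the subtrees of $M$, $C$ the right subtree of $N$) replaces the subtree at $N$ by one whose root has left subtree $A$ and right child a node with subtrees $B,C$; left rotation is the inverse. The right-arm rotation distance $d_{RA}(T_1,T_2)$ is the minimal number of rotations, each performed at a node on the right arm, needed to transform $T_1$ into $T_2$. Thompson's group $F=\langle x_0,x_1,\ldots\mid x_i^{-1}x_nx_i=x_{n+1}\ (i<n)\rangle$. The leaf exponent of leaf $k$ in a tree is the length of the longest upward path of left edges from leaf $k$ none of whose vertices lies on the right arm. The tree pair diagram $(T_1,T_2)$ represents the element of $F$ given by the word $x_0^{f_0}\cdots x_n^{f_n}x_n^{-e_n}\cdots x_0^{-e_0}$, where $e_i$, $f_i$ are the leaf exponents of leaf $i$ in $T_1$, $T_2$. Word length with respect to a generating set is the length of a shortest word in the generators and their inverses representing the element. *)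

(* Defs.v *)
From mathcomp Require Import all_boot.
Set Implicit Arguments. Unset Strict Implicit. Unset Printing Implicit Defensive.

Inductive tree : Type := Leaf | Node of tree & tree.

Fixpoint nodes (t : tree) : nat :=
  match t with Leaf => 0 | Node l r => (nodes l + nodes r).+1 end.

Inductive rot_root : tree -> tree -> Prop :=
| RotRight A B C : rot_root (Node (Node A B) C) (Node A (Node B C))
| RotLeft  A B C : rot_root (Node A (Node B C)) (Node (Node A B) C).

Inductive ra_step : tree -> tree -> Prop :=
| RAroot t t' : rot_root t t' -> ra_step t t'
| RAright A r r' : ra_step r r' -> ra_step (Node A r) (Node A r').

Inductive ra_path : nat -> tree -> tree -> Prop :=
| RAP0 t : ra_path 0 t t
| RAPS k t u v : ra_step t u -> ra_path k u v -> ra_path k.+1 t v.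

Definition ra_dist_is (T1 T2 : tree) (d : nat) : Prop :=
  ra_path d T1 T2 /\ forall k, ra_path k T1 T2 -> d <= k.

(* lpath t : for each leaf of t (left to right), the number of edges of the
   maximal upward path of left edges from that leaf staying inside t. *)
Fixpoint lpath (t : tree) : seq nat :=
  match t with
  | Leaf => [:: 0]
  | Node l r =>
      let s := lpath l in (head 0 s).+1 :: behead s ++ lpath r
  end.

(* leaf exponents of a tree: the upward left paths may not contain any
   vertex of the right arm (root and its iterated right children). *)
Fixpoint leaf_exps (t : tree) : seq nat :=
  match t with
  | Leaf => [:: 0]
  | Node l r => lpath l ++ leaf_exps r
  end.

(* A letter (i, true) is x_i, (i, false) is x_i^{-1}. *)
Definition letter := (nat * bool)%type.
Definition word := seq letter.

Inductive feq : word -> word -> Prop :=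
| feq_refl u : feq u u
| feq_sym u v : feq u v -> feq v u
| feq_trans u v w : feq u v -> feq v w -> feq u w
| feq_cong a b u v : feq u v -> feq (a ++ u ++ b) (a ++ v ++ b)
| feq_free i s : feq [:: (i, s); (i, ~~ s)] [::]
| feq_rel i n : i < n ->
    feq [:: (i, false); (n, true); (i, true)] [:: (n.+1, true)].

Definition wlen_is (w : word) (d : nat) : Prop :=
  (exists u : word, size u = d /\ feq u w) /\
  forall u : word, feq u w -> d <= size u.

(* The word x_0^{f_0} ... x_n^{f_n} x_n^{-e_n} ... x_0^{-e_0} of the
   tree pair diagram (T1,T2), e = leaf exponents of T1, f = of T2. *)
Definition tpd_word (T1 T2 : tree) : word :=
  let e := leaf_exps T1 in
  let f := leaf_exps T2 in
  flatten [seq nseq (nth 0 f i) (i, true) | i <- iota 0 (size f)] ++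
  flatten [seq nseq (nth 0 e i) (i, false) | i <- rev (iota 0 (size e))].

(* Main.v *)
Require Import Defs.
From mathcomp Require Import all_boot.
From mathcomp Require Import zify.
From Stdlib Require Import FunctionalExtensionality.
Set Implicit Arguments. Unset Strict Implicit. Unset Printing Implicit Defensive.

Inductive ltree : Type := LLeaf of nat & seq bool | LNode of ltree & ltree.

Definition redp (a b : ltree) : bool :=
  match a, b with
  | LLeaf k (false :: s), LLeaf k' (true :: s') => (k == k') && (s == s')
  | _, _ => false
  end.

Definition up (a : ltree) : ltree :=
  match a with LLeaf k (_ :: s) => LLeaf k s | _ => a end.

Definition mk (a b : ltree) : ltree := if redp a b then up a else LNode a b.

Definition splitt (t : ltree) : ltree * ltree :=
  match t with
  | LNode a b => (a, b)
  | LLeaf k s => (LLeaf k (false :: s), LLeaf k (true :: s))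
  end.

Definition state := nat -> ltree.

Definition merge (i : nat) (f : state) : state := fun j =>
  if j < i then f j else if j == i then mk (f i) (f i.+1) else f j.+1.

Definition splitS (i : nat) (f : state) : state := fun j =>
  if j < i then f j else if j == i then (splitt (f i)).1
  else if j == i.+1 then (splitt (f i)).2 else f j.-1.

Definition step (a : letter) (f : state) : state :=
  if a.2 then merge a.1 f else splitS a.1 f.

Definition act (u : word) (f : state) : state := foldr step f u.

Lemma act_cat u v f : act (u ++ v) f = act u (act v f).
Proof. by rewrite /act foldr_cat. Qed.

Fixpoint red (t : ltree) : bool :=
  match t with
  | LLeaf _ _ => true
  | LNode a b => [&& red a, red b & ~~ redp a b]
  end.

Definition redS (f : state) := forall j, red (f j).

Lemma split_mk a b : splitt (mk a b) = (a, b).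
Proof.
rewrite /mk; case: a => [k [|[] s]|? ?]; case: b => [k' [|[] s']|? ?] //=.
by case: eqP => [->|] //=; case: eqP => [->|].
Qed.

Lemma red_mk a b : red a -> red b -> red (mk a b).
Proof.
move=> ha hb; rewrite /mk; case E: (redp a b) => /=; last by rewrite ha hb E.
by case: a ha E => [k [|? ?]|? ?].
Qed.

Lemma red_split t : red t -> red (splitt t).1 /\ red (splitt t).2.
Proof. by case: t => [//|a b] /= /and3P[]. Qed.

Lemma mk_split t : red t -> mk (splitt t).1 (splitt t).2 = t.
Proof.
rewrite /mk; case: t => [k s|a b] /=; first by rewrite !eqxx.
by case/and3P => _ _ /negbTE ->.
Qed.

Ltac cases := repeat (match goal with
  | |- context [if ?c then _ else _] => let E := fresh "E" in case E: c
  end).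

Ltac eqs := repeat match goal with H : (_ == _) = true |- _ => move/eqP: H => H; subst end.

Lemma merge_split i f : redS f -> merge i (splitS i f) = f.
Proof.
move=> hf; apply: functional_extensionality => j; rewrite /merge /splitS.
by cases; try (exfalso; lia); eqs; rewrite ?mk_split.
Qed.

Lemma split_merge i f : splitS i (merge i f) = f.
Proof.
apply: functional_extensionality => j; rewrite /merge /splitS.
cases; try (exfalso; lia); eqs; rewrite ?split_mk //; try (congr f; lia).
Qed.

Lemma redS_step a f : redS f -> redS (step a f).
Proof.
case: a => i [] hf j; rewrite /step /= /merge /splitS; cases => //; try by apply: red_mk.
all: by case: (red_split (hf i)).
Qed.

Lemma redS_act u f : redS f -> redS (act u f).
Proof. by elim: u => //= a u IH hf; apply: redS_step; apply: IH. Qed.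

Lemma rel_act i n f : i < n ->
  act [:: (i, false); (n, true); (i, true)] f = act [:: (n.+1, true)] f.
Proof.
move=> hin; apply: functional_extensionality => j; rewrite /= /step /= /merge /splitS.
cases; try (exfalso; lia); eqs; rewrite ?split_mk //; try (congr f; lia).
all: try (congr mk; congr f; lia).
Qed.

Lemma feq_act u v : feq u v -> forall f, redS f -> act u f = act v f.
Proof.
elim=> {u v}.
- by [].
- by move=> u v _ IH f hf; rewrite IH.
- by move=> u v w _ IH1 _ IH2 f hf; rewrite IH1 // IH2.
- move=> a b u v _ IH f hf; rewrite !act_cat IH //.
  by apply: redS_act.
- move=> i [] f hf /=; rewrite /step /=; first by rewrite merge_split.
  by rewrite split_merge.
- by move=> i n hin f _; apply: rel_act.
Qed.

Fixpoint w (s : seq bool) : nat :=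
  match s with false :: s' => (w s').+1 | _ => 0 end.

Fixpoint c (t : ltree) : nat :=
  match t with LLeaf _ s => w s | LNode a b => (c a + c b).+1 end.

Lemma c_mk a b : c (mk a b) <= (c a + c b).+1.
Proof.
rewrite /mk; case E: (redp a b) => //.
case: a b E => [k [|[] s]|? ?] [k' [|[] s']|? ?] //= _; lia.
Qed.

Lemma c_split t : c (splitt t).1 + c (splitt t).2 <= (c t).+1.
Proof. case: t => [k s|a b] /=; lia. Qed.

Fixpoint DN (N : nat) (f : state) : nat :=
  if N is N'.+1 then DN N' f + c (f N') else 0.

Definition sh (f : state) (k : nat) : state := fun j => f (k + j).

Lemma DN_ext N f g : (forall j, j < N -> f j = g j) -> DN N f = DN N g.
Proof.
elim: N => //= N IH H; rewrite IH ?H //; move=> j hj; apply: H; lia.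
Qed.

Lemma DN_add a b f : DN (a + b) f = DN a f + DN b (sh f a).
Proof.
elim: b => [|b IH] /=; first by rewrite !addn0.
by rewrite addnS /= IH /sh addnA.
Qed.

Lemma DN1 f : DN 1 f = c (f 0). Proof. by []. Qed.

Definition triv (f : state) (M : nat) := forall j, M <= j -> c (f j) = 0.

Lemma DN_stab f M N : triv f M -> M <= N -> DN N f = DN M f.
Proof.
move=> ht; elim: N => [|N IH] hN; first by have -> : M = 0 by lia.
case: (ltnP M N.+1) => h; last by have -> : M = N.+1 by lia.
by rewrite /= IH ?ht; lia.
Qed.

Lemma DN_merge i f N : i < N -> DN N (merge i f) <= DN N.+1 f + 1.
Proof.
move=> hN; have -> : N = i + (1 + (N - i.+1)) by lia.
have -> : (i + (1 + (N - i.+1))).+1 = i + (2 + (N - i.+1)) by lia.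
rewrite !DN_add.
have -> : DN i (merge i f) = DN i f.
  by apply: DN_ext => j hj; rewrite /merge hj.
have -> : DN (N - i.+1) (sh (sh (merge i f) i) 1) = DN (N - i.+1) (sh (sh f i) 2).
  apply: DN_ext => j _; rewrite /sh /merge; cases; try (exfalso; lia); congr f; lia.
have -> : DN 1 (sh (merge i f) i) = c (mk (f i) (f i.+1)).
  by rewrite DN1 /sh /merge addn0 ltnn eqxx.
have -> : DN 2 (sh f i) = c (f i) + c (f i.+1).
  by rewrite /= /sh addn0 addn1.
have := c_mk (f i) (f i.+1); lia.
Qed.

Lemma DN_split i f N : i < N -> DN N.+1 (splitS i f) <= DN N f + 1.
Proof.
move=> hN; have -> : N = i + (1 + (N - i.+1)) by lia.
have -> : (i + (1 + (N - i.+1))).+1 = i + (2 + (N - i.+1)) by lia.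
rewrite !DN_add.
have -> : DN i (splitS i f) = DN i f.
  by apply: DN_ext => j hj; rewrite /splitS hj.
have -> : DN (N - i.+1) (sh (sh (splitS i f) i) 2) = DN (N - i.+1) (sh (sh f i) 1).
  apply: DN_ext => j _; rewrite /sh /splitS; cases; try (exfalso; lia); congr f; lia.
have -> : DN 2 (sh (splitS i f) i) = c (splitt (f i)).1 + c (splitt (f i)).2.
  rewrite /= /sh /splitS addn0 addn1 ltnn eqxx ltnNge leqnSn /=.
  by rewrite eqn_leq ltnn /= eqxx.
rewrite DN1 /sh addn0; have := c_split (f i); lia.
Qed.

Definition x0 : state := fun j => LLeaf j [::].

Lemma redS_x0 : redS x0. Proof. by []. Qed.

Lemma lower_act u : exists M, triv (act u x0) M /\ DN M (act u x0) <= size u.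
Proof.
elim: u => [|[i b] u [M [hM hD]]] /=; first by exists 0.
rewrite /step /=; case: b.
- exists (maxn M i).+1; split.
  + move=> j hj; rewrite /merge; cases; try (exfalso; lia).
    apply: hM; lia.
  + have := @DN_merge i (act u x0) (maxn M i).+1 (_ : i < (maxn M i).+1).
    rewrite (DN_stab hM (_ : M <= (maxn M i).+2)); try lia.
- exists (maxn M i).+2; split.
  + move=> j hj; rewrite /splitS; cases; try (exfalso; lia).
    apply: hM; lia.
  + have := @DN_split i (act u x0) (maxn M i).+1 (_ : i < (maxn M i).+1).
    rewrite (DN_stab hM (_ : M <= (maxn M i).+1)); try lia.
Qed.

Lemma lower_word u v : feq u v -> exists M, triv (act v x0) M /\ DN M (act v x0) <= size u.
Proof.
move=> h; rewrite -(feq_act h redS_x0); exact: lower_act.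
Qed.

Fixpoint leaves (t : tree) : nat :=
  match t with Leaf => 1 | Node a b => leaves a + leaves b end.

Lemma leaves_gt0 t : 0 < leaves t.
Proof. elim: t => //= a IHa b IHb; lia. Qed.

Lemma leaves_nodes t : leaves t = (nodes t).+1.
Proof. elim: t => //= a IHa b IHb; lia. Qed.

Fixpoint Lw (t : tree) (o : nat) : word :=
  match t with Leaf => [::] | Node a b => (o, true) :: Lw a o ++ Lw b (o + leaves a) end.

Fixpoint PT (t : tree) (o : nat) : word :=
  match t with Leaf => [::] | Node l r => Lw l o ++ PT r (o + leaves l) end.

Fixpoint ew (s : seq nat) (o : nat) : word :=
  match s with [::] => [::] | e :: s' => nseq e (o, true) ++ ew s' o.+1 end.

Lemma ew_cat s1 s2 o : ew (s1 ++ s2) o = ew s1 o ++ ew s2 (o + size s1).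
Proof.
elim: s1 o => [|e s IH] o /=; first by rewrite addn0.
by rewrite IH catA addSnnS.
Qed.

Lemma size_lpath t : size (lpath t) = leaves t.
Proof.
elim: t => //= a IHa b IHb; rewrite size_cat size_behead IHa IHb.
have := leaves_gt0 a; lia.
Qed.

Lemma ew_lpath t o : ew (lpath t) o = Lw t o.
Proof.
elim: t o => //= a IHa b IHb o.
case E: (lpath a) (IHa o) (size_lpath a) => [|h s] //= <- hs.
  by have := leaves_gt0 a; lia.
by rewrite ew_cat IHb -catA -hs addSnnS.
Qed.

Lemma ew_PT t o : ew (leaf_exps t) o = PT t o.
Proof.
elim: t o => //= l _ r IH o.
by rewrite ew_cat ew_lpath size_lpath IH.
Qed.

Definition flipl (a : letter) : letter := (a.1, ~~ a.2).
Definition winv (u : word) : word := rev (map flipl u).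

Lemma ew_flat f o :
  flatten [seq nseq (nth 0 f (i - o)) (i, true) | i <- iota o (size f)] = ew f o.
Proof.
elim: f o => [|e f IH] o //=.
rewrite subnn /= -IH; congr (_ ++ flatten _).
apply/eq_in_map => i; rewrite mem_iota => /andP[h1 h2].
have -> : i - o = (i - o.+1).+1 by lia.
by [].
Qed.

Lemma winv_cat u v : winv (u ++ v) = winv v ++ winv u.
Proof. by rewrite /winv map_cat rev_cat. Qed.

Lemma winv_neg (F : nat -> nat) s :
  flatten [seq nseq (F i) (i, false) | i <- rev s] =
  winv (flatten [seq nseq (F i) (i, true) | i <- s]).
Proof.
elim: s => [|a s IH] //=.
rewrite rev_cons map_rcons flatten_rcons IH winv_cat; congr (_ ++ _).
by rewrite /winv map_nseq rev_nseq.
Qed.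

Lemma tpd_split T1 T2 : tpd_word T1 T2 = PT T2 0 ++ winv (PT T1 0).
Proof.
rewrite /tpd_word -!ew_PT -!(ew_flat _ 0) winv_neg.
by congr (_ ++ _); [|congr winv]; congr flatten; apply: eq_map => i; rewrite subn0.
Qed.

Lemma feq_catl p u v : feq u v -> feq (p ++ u) (p ++ v).
Proof. by move=> h; have := feq_cong p [::] h; rewrite !cats0. Qed.

Lemma feq_catr q u v : feq u v -> feq (u ++ q) (v ++ q).
Proof. by move=> h; have := feq_cong [::] q h. Qed.

Lemma feq_cons a u v : feq u v -> feq (a :: u) (a :: v).
Proof. exact: (feq_catl [:: a]). Qed.

Lemma feq_cat u u' v v' : feq u u' -> feq v v' -> feq (u ++ v) (u' ++ v').
Proof.
move=> h1 h2; apply: feq_trans (feq_catr _ h1) _; exact: feq_catl.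
Qed.

Lemma feq_canc a u : feq (a :: flipl a :: u) u.
Proof.
case: a => i s; have := feq_catr u (feq_free i s); by [].
Qed.

Lemma feq_canc' a u : feq (flipl a :: a :: u) u.
Proof.
case: a => i s; have := feq_catr u (feq_free i (~~ s)); by rewrite negbK.
Qed.

Lemma feq_comm i n b : i < n -> feq [:: (i, true); (n.+1, b)] [:: (n, b); (i, true)].
Proof.
move=> hin.
have ht : feq [:: (i, true); (n.+1, true)] [:: (n, true); (i, true)].
  apply: feq_sym; apply: feq_trans (feq_sym (feq_canc (i, true) [:: (n, true); (i, true)])) _.
  exact: (feq_cons (i, true) (feq_rel hin)).
case: b => //.
apply: feq_trans (feq_sym (feq_canc' (n, true) [:: (i, true); (n.+1, false)])) _.
have h2 := feq_cong [:: (n, false)] [:: (n.+1, false)] (feq_sym ht).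
apply: feq_trans h2 _ => /=.
exact: (feq_catl [:: (n, false); (i, true)] (feq_canc (n.+1, true) [::])).
Qed.

Lemma feq_Lw t o k b :
  feq (Lw t o ++ [:: (o + leaves t + k, b)]) (((o + k).+1, b) :: Lw t o).
Proof.
elim: t o k => [|l IHl r IHr] o k /=; first by rewrite addn1 addSn; apply: feq_refl.
rewrite -catA.
have e : o + (leaves l + leaves r) + k = o + leaves l + leaves r + k by lia.
rewrite e.
apply: feq_trans (feq_cons _ (feq_catl _ (IHr _ _))) _.
have e2 : ((o + leaves l + k).+1, b) = (o + leaves l + k.+1, b) by rewrite addnS.
rewrite e2 -[_ :: Lw r _]cat1s catA.
apply: feq_trans (feq_cons _ (feq_catr _ (IHl _ _))) _.
rewrite -addnS.
have := feq_catr (Lw l o ++ Lw r (o + leaves l)) (@feq_comm o (o + k).+1 b (_ : o < (o+k).+1)).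
rewrite /= !addnS => h; apply: h; lia.
Qed.

Lemma step_feq T T' : ra_step T T' ->
  forall o, exists i b, feq (PT T o) ((o + i, b) :: PT T' o).
Proof.
elim=> {T T'}.
- move=> t t' []; move=> A B C o; exists 0.
  + exists true; rewrite addn0 /= -!catA -addnA; exact: feq_refl.
  + exists false; rewrite addn0 /= -!catA -addnA.
    exact: feq_sym (feq_canc' (o, true) _).
- move=> A r r' _ IH o; have [i [b h]] := IH (o + leaves A).
  exists i.+1, b => /=.
  apply: feq_trans (feq_catl _ h) _.
  rewrite -cat1s catA.
  by have := feq_catr (PT r' (o + leaves A)) (feq_Lw A o i b); rewrite addnS.
Qed.

Lemma path_feq k T T' : ra_path k T T' ->
  exists A : word, size A = k /\ feq (PT T' 0) (A ++ PT T 0).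
Proof.
elim=> {k T T'}; first by move=> t; exists [::]; split => //; exact: feq_refl.
move=> k t u v hs _ [A [hA hf]].
have [i [b h]] := step_feq hs 0.
exists (rcons A (flipl (0 + i, b))); split; first by rewrite size_rcons hA.
apply: feq_trans hf _; rewrite -cats1 -catA; apply: feq_catl => /=.
apply: feq_sym; apply: feq_trans (feq_cons _ h) _; exact: feq_canc'.
Qed.

Lemma feq_winv u : feq (u ++ winv u) [::].
Proof.
elim: u => [|a u IH] /=; first exact: feq_refl.
rewrite /winv /= rev_cons -cats1 -/(winv u) catA.
apply: feq_trans (feq_cons _ (feq_catr _ IH)) _; exact: feq_canc a [::].
Qed.

Lemma ra_step_sym T T' : ra_step T T' -> ra_step T' T.
Proof.
elim=> {T T'}; last by move=> A r r' _ IH; apply: RAright.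
by move=> t t' [] A B C; apply: RAroot; constructor.
Qed.

Lemma ra_path_snoc k T U V : ra_path k T U -> ra_step U V -> ra_path k.+1 T V.
Proof.
elim=> {k T U}; first by move=> t h; apply: RAPS h (RAP0 _).
by move=> k t u v h _ IH hs; apply: RAPS h (IH hs).
Qed.

Lemma ra_path_rev k T U : ra_path k T U -> ra_path k U T.
Proof.
elim=> {k T U}; first by move=> t; apply: RAP0.
by move=> k t u v h _ IH; apply: ra_path_snoc IH (ra_step_sym h).
Qed.

Lemma ra_step_nodes T T' : ra_step T T' -> nodes T' = nodes T.
Proof.
elim=> {T T'} /=; last by move=> A r r' _ ->.
by move=> t t' [] A B C /=; lia.
Qed.

Fixpoint build (t : tree) (y : state) : ltree :=
  match t with Leaf => y 0 | Node a b => mk (build a y) (build b (sh y (leaves a))) end.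

Lemma build_ext t y y' : (forall j, j < leaves t -> y j = y' j) -> build t y = build t y'.
Proof.
elim: t y y' => [|a IHa b IHb] y y' h /=; first by apply: h.
congr mk; first by apply: IHa => j hj; apply: h => /=; lia.
apply: IHb => j hj; rewrite /sh; apply: h => /=; lia.
Qed.

Lemma sh_sh f a b : sh (sh f a) b = sh f (a + b).
Proof. by apply: functional_extensionality => j; rewrite /sh addnA. Qed.

Definition LwS (t : tree) (o : nat) (f : state) : state := fun j =>
  if j < o then f j else if j == o then build t (sh f o) else f (j + (leaves t).-1).

Lemma act_Lw t o f : act (Lw t o) f = LwS t o f.
Proof.
elim: t o f => [|a IHa b IHb] o f.
  apply: functional_extensionality => j; rewrite /LwS /=.
  by cases; eqs; rewrite /sh ?addn0.
rewrite /= act_cat IHb IHa /step /=.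
have ha := leaves_gt0 a; have hb := leaves_gt0 b.
apply: functional_extensionality => j; rewrite /merge /LwS.
cases; try (exfalso; lia); eqs.
- by [].
- congr mk.
  + apply: build_ext => j hj; rewrite /sh; cases => //; exfalso; lia.
  + by rewrite sh_sh.
- congr f => /=; lia.
Qed.

Fixpoint PS (t : tree) (o : nat) (f : state) : state :=
  match t with Leaf => f | Node l r => LwS l o (PS r (o + leaves l) f) end.

Lemma act_PT t o f : act (PT t o) f = PS t o f.
Proof.
elim: t o f => //= l _ r IH o f; by rewrite act_cat IH act_Lw.
Qed.

Fixpoint arm (t : tree) : nat := if t is Node _ r then (arm r).+1 else 0.

Lemma arm_nodes t : arm t <= nodes t.
Proof. elim: t => //= l _ r IH; lia. Qed.

Lemma PS_low t o f j : j < o -> PS t o f j = f j.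
Proof.
elim: t o f => //= l _ r IH o f hj; rewrite /LwS hj IH //; lia.
Qed.

Lemma PS_high t o f j : o + arm t <= j -> PS t o f j = f (j + nodes t - arm t).
Proof.
elim: t o f j => [|l _ r IH] o f j /=; first by move=> _; rewrite !addn0 subn0.
move=> hj; rewrite /LwS; cases; try (exfalso; lia).
rewrite IH; last by have := leaves_gt0 l; lia.
congr f; have := arm_nodes r; rewrite leaves_nodes; lia.
Qed.

Fixpoint CT (t : tree) (g : state) : nat :=
  match t with Leaf => 0 | Node l r => c (build l g) + CT r (sh g (leaves l)) end.

Lemma DN_PS t o f : DN (o + arm t) (PS t o f) = DN o f + CT t (sh f o).
Proof.
elim: t o f => [|l _ r IH] o f /=; first by rewrite !addn0.
have hl := leaves_gt0 l.
have hlow : forall j, j < o + leaves l -> PS r (o + leaves l) f j = f j.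
  by move=> j hj; apply: PS_low.
rewrite -addSnnS -addn1 -addnA DN_add DN_add DN1.
have -> : DN o (LwS l o (PS r (o + leaves l) f)) = DN o f.
  by apply: DN_ext => j hj; rewrite /LwS hj hlow //; lia.
have -> : sh (LwS l o (PS r (o + leaves l) f)) o 0 = build l (sh f o).
  rewrite /sh /LwS addn0 ltnn eqxx; apply: build_ext => j hj.
  by rewrite /sh hlow //; lia.
rewrite (@DN_ext (arm r) _ (sh (PS r (o + leaves l) f) (o + leaves l))); last first.
  move=> j _; rewrite /sh /LwS; cases; try (exfalso; lia).
  congr PS; lia.
have := IH (o + leaves l) f; rewrite DN_add.
have -> : DN (o + leaves l) (PS r (o + leaves l) f) = DN (o + leaves l) f.
  by apply: DN_ext => j hj; rewrite hlow.
rewrite DN_add sh_sh; lia.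
Qed.

Fixpoint labfun (t : tree) (k : nat) (s : seq bool) (j : nat) : ltree :=
  match t with
  | Leaf => LLeaf k s
  | Node a b => if j < leaves a then labfun a k (false :: s) j
                else labfun b k (true :: s) (j - leaves a)
  end.

Fixpoint YF (t : tree) (m : nat) (j : nat) : ltree :=
  match t with
  | Leaf => LLeaf (m + j) [::]
  | Node l r => if j < leaves l then labfun l m [::] j else YF r m.+1 (j - leaves l)
  end.

Lemma nseqS_cat (x : bool) r s : nseq r x ++ x :: s = nseq r.+1 x ++ s.
Proof. by elim: r => //= r ->. Qed.

Lemma lab_suf t k s j : exists p, labfun t k s j = LLeaf k (p ++ s).
Proof.
elim: t s j => [|a IHa b IHb] s j /=; first by exists [::].
case: ifP => _; [have [p ->] := IHa (false :: s) j; exists (rcons p false)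
  | have [p ->] := IHb (true :: s) (j - leaves a); exists (rcons p true)]; by rewrite cat_rcons.
Qed.

Lemma lab_first t k s : exists r, labfun t k s 0 = LLeaf k (nseq r false ++ s).
Proof.
elim: t s => [|a IHa b IHb] s /=; first by exists 0.
rewrite leaves_gt0; have [r ->] := IHa (false :: s); exists r.+1.
by rewrite nseqS_cat.
Qed.

Lemma lab_last t k s : exists q, labfun t k s (leaves t).-1 = LLeaf k (nseq q true ++ s).
Proof.
elim: t s => [|a IHa b IHb] s /=; first by exists 0.
have ha := leaves_gt0 a; have hb := leaves_gt0 b.
have -> : (leaves a + leaves b).-1 < leaves a = false by lia.
have -> : (leaves a + leaves b).-1 - leaves a = (leaves b).-1 by lia.
have [q ->] := IHb (true :: s); exists q.+1; by rewrite nseqS_cat.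
Qed.

Lemma lab_mid t k s j : j.+1 < leaves t ->
  exists q v, labfun t k s j = LLeaf k (nseq q true ++ false :: v).
Proof.
elim: t s j => [|a IHa b IHb] s j /=; first by lia.
move=> hj; case: (ltnP j.+1 (leaves a)) => h1.
  by rewrite (_ : j < leaves a); [apply: IHa | lia].
case: (ltnP j (leaves a)) => h2.
  have -> : j = (leaves a).-1 by lia.
  have [q ->] := lab_last a k (false :: s); by exists q, s.
apply: IHb; lia.
Qed.

Lemma nseq_true_false q q' v v' :
  nseq q true ++ false :: v = nseq q' true ++ false :: v' -> v = v'.
Proof.
elim: q q' => [|q IH] [|q'] //=; first by case.
by case=> /IH.
Qed.

Lemma nseq_true_nofalse q q' v : nseq q true <> nseq q' true ++ false :: v.
Proof.
move=> h; have : false \in nseq q true by rewrite h mem_cat in_cons eqxx orbT.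
by rewrite mem_nseq; case: q {h}.
Qed.

Lemma suffix_neq (p1 p2 : seq bool) x y s : p1 ++ x :: s = p2 ++ y :: s -> x = y.
Proof.
move=> h; have hs := congr1 size h; rewrite !size_cat /= in hs.
have e : size p1 = size p2 by lia.
have := congr1 (drop (size p1)) h; rewrite drop_size_cat // e drop_size_cat //.
by case.
Qed.

Lemma lab_nxt t k s j q v : j.+1 < leaves t ->
  labfun t k s j = LLeaf k (nseq q true ++ false :: v) ->
  exists r, labfun t k s j.+1 = LLeaf k (nseq r false ++ true :: v).
Proof.
elim: t s j => [|a IHa b IHb] s j /=; first by lia.
move=> hj; case: (ltnP j.+1 (leaves a)) => h1.
  by rewrite (_ : j < leaves a) ?h1; [apply: IHa | lia].
case: (ltnP j (leaves a)) => h2.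
  have ej : j = (leaves a).-1 by lia.
  have -> : j.+1 - leaves a = 0 by lia.
  have [q0 hq0] := lab_last a k (false :: s); rewrite -ej in hq0; rewrite hq0 => -[].
  move/nseq_true_false => <-.
  have [r ->] := lab_first b k (true :: s); by exists r.
move=> h; rewrite subSn //; apply: IHb h; lia.
Qed.

Lemma YF_tail t m j : nodes t <= j -> exists k, YF t m j = LLeaf k [::].
Proof.
elim: t m j => [|l _ r IH] m j /=; first by exists (m + j).
move=> hj; rewrite leaves_nodes; case: ifP => h; first by exfalso; lia.
apply: IH; lia.
Qed.

Lemma YF_leaf t m j : exists k s, YF t m j = LLeaf k s.
Proof.
elim: t m j => [|l _ r IH] m j /=; first by exists (m + j), [::].
by case: ifP => _ //; have [p ->] := lab_suf l m [::] j; exists m, (p ++ [::]).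
Qed.

Lemma YF_idx t m j k s : YF t m j = LLeaf k s -> m <= k.
Proof.
elim: t m j => [|l _ r IH] m j /=; first by case=> <- _; lia.
case: ifP => _; first by have [p ->] := lab_suf l m [::] j; case=> ->.
by move/IH; lia.
Qed.

Definition Nxt (g : state) := forall j k q v, g j = LLeaf k (nseq q true ++ false :: v) ->
  exists r, g j.+1 = LLeaf k (nseq r false ++ true :: v).

Lemma Nxt_YF t m : Nxt (YF t m).
Proof.
elim: t m => [|l _ r IH] m j k q v /=; first by case=> _ /esym; case: q.
have hl := leaves_gt0 l.
case: (ltnP j.+1 (leaves l)) => h1.
  rewrite (ltnW h1) => h.
  have ek : k = m by move: h; have [p ->] := lab_suf l m [::] j; case.
  subst k; exact: lab_nxt h1 h.
case: (ltnP j (leaves l)) => h2.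
  have ej : j = (leaves l).-1 by lia.
  have [q0 hq0] := lab_last l m [::]; rewrite -ej in hq0; rewrite hq0 cats0.
  by case=> _ /nseq_true_nofalse.
move=> h; rewrite subSn //; exact: IH _ _ _ _ _ h.
Qed.

Lemma mk_leaf a b k s : mk a b = LLeaf k s ->
  a = LLeaf k (false :: s) /\ b = LLeaf k (true :: s).
Proof.
rewrite /mk; case E: (redp a b) => //.
case: a b E => [k1 [|[] s1]|? ?] [k2 [|[] s2]|? ?] //= /andP[/eqP <- /eqP <-].
by case=> <- <-.
Qed.

Definition isnode (t : ltree) := if t is LNode _ _ then true else false.

Lemma mk_node a b : isnode (mk a b) -> mk a b = LNode a b.
Proof.
rewrite /mk; case E: (redp a b) => //.
by case: a b E => [k1 [|[] s1]|? ?] [k2 [|[] s2]|? ?].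
Qed.

Lemma leaf_of t : ~~ isnode t -> exists k s, t = LLeaf k s.
Proof. by case: t => // k s; exists k, s. Qed.

Lemma build_first t z k s : build t z = LLeaf k s ->
  exists r, z 0 = LLeaf k (nseq r false ++ s).
Proof.
elim: t z s => [|a IHa b _] z s /=; first by move=> h; exists 0; rewrite h.
move/mk_leaf => -[/IHa [r ->] _]; exists r.+1; by rewrite nseqS_cat.
Qed.

Lemma build_last t z k s : build t z = LLeaf k s ->
  exists q, z (leaves t).-1 = LLeaf k (nseq q true ++ s).
Proof.
elim: t z s => [|a _ b IHb] z s /=; first by move=> h; exists 0; rewrite h.
move/mk_leaf => -[_ /IHb [q hq]]; exists q.+1; rewrite -nseqS_cat -hq /sh.
congr z; have := leaves_gt0 a; have := leaves_gt0 b; lia.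
Qed.

Lemma build_all t z k s : build t z = LLeaf k s ->
  forall j, j < leaves t -> exists p, z j = LLeaf k (p ++ s).
Proof.
elim: t z s => [|a IHa b IHb] z s /=; first by move=> h j hj; exists [::]; have -> : j = 0 by lia.
move/mk_leaf => [ha hb] j hj.
case: (ltnP j (leaves a)) => h.
  by have [p ->] := IHa _ _ ha j h; exists (rcons p false); rewrite cat_rcons.
have hj' : j - leaves a < leaves b by lia.
have [p hp] := IHb _ _ hb (j - leaves a) hj'.
exists (rcons p true); rewrite cat_rcons -hp /sh; congr z; lia.
Qed.

Lemma collapse t z k s : (forall j, j < leaves t -> z j = labfun t k s j) ->
  build t z = LLeaf k s.
Proof.
elim: t z s => [|a IHa b IHb] z s /= h; first by rewrite h.
rewrite (IHa z (false :: s)); last by move=> j hj; rewrite h ?hj //; lia.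
rewrite (IHb _ (true :: s)); last first.
  move=> j hj; rewrite /sh h; last by lia.
  by rewrite (_ : leaves a + j < leaves a = false) ?addKn //; lia.
by rewrite /mk /= !eqxx.
Qed.

Lemma build_uniq A B z k s : build A z = LLeaf k s ->
  (forall j, j < leaves B -> z j = labfun B k s j) -> leaves A = leaves B -> A = B.
Proof.
elim: A B z k s => [|a IHa b IHb] [|c d] z k s //=.
- by have := leaves_gt0 c; have := leaves_gt0 d; lia.
- by have := leaves_gt0 a; have := leaves_gt0 b; lia.
move/mk_leaf => [ha hb] hz hl.
have ea : leaves a = leaves c.
  case: (ltngtP (leaves a) (leaves c)) => // h.
  - have [r hr] := build_first hb; rewrite /sh addn0 hz in hr; last by lia.
    rewrite h in hr; have [p hp] := lab_suf c k (false :: s) (leaves a).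
    by rewrite hp in hr; case: hr => /suffix_neq.
  - have [p hp] := build_all ha h.
    rewrite hz in hp; last by lia.
    rewrite ltnn subnn in hp; have [p' hp'] := lab_suf d k (true :: s) 0.
    by rewrite hp' in hp; case: hp => /suffix_neq.
congr Node.
  apply: IHa ha _ ea => j hj; rewrite hz; last by lia.
  by rewrite hj.
apply: IHb hb _ _ => [j hj|]; last by lia.
rewrite /sh hz; last by lia.
rewrite (_ : leaves a + j < leaves c = false); last by lia.
by rewrite ea addKn.
Qed.

Lemma PS_YF t m o f : (forall j, f (o + j) = YF t m j) ->
  PS t o f = fun j => if j < o then f j else LLeaf (m + (j - o)) [::].
Proof.
elim: t m o f => [|l _ r IH] m o f h /=.
  apply: functional_extensionality => j; case: ifP => // hj.
  by have := h (j - o); rewrite /= => <-; congr f; lia.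
rewrite (IH m.+1 (o + leaves l) f); last first.
  move=> j; rewrite -addnA h /= (_ : leaves l + j < leaves l = false) ?addKn //; lia.
have hl := leaves_gt0 l.
apply: functional_extensionality => j; rewrite /LwS; cases; try (exfalso; lia); eqs.
- by [].
- rewrite (@collapse l _ m [::]) ?subnn ?addn0 // => j hj.
  rewrite /sh; cases; try (exfalso; lia).
  by rewrite h /= hj.
- congr LLeaf; lia.
Qed.

Lemma step_inv a g : redS g -> step (flipl a) (step a g) = g.
Proof.
case: a => i [] hg; rewrite /step /=; first by rewrite split_merge.
by rewrite merge_split.
Qed.

Lemma winv_act u f : redS f -> act (winv u) (act u f) = f.
Proof.
elim: u f => [|a u IH] f hf //=.
rewrite /winv /= rev_cons -cats1 act_cat /= step_inv; first exact: IH.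
exact: redS_act.
Qed.

Lemma build_Node a b g : build (Node a b) g = mk (build a g) (build b (sh g (leaves a))).
Proof. by []. Qed.

Fixpoint HN (t : tree) (g : state) : bool :=
  match t with Leaf => false | Node l r => isnode (build l g) || HN r (sh g (leaves l)) end.

Definition AllLeafS (g : state) := forall j, ~~ isnode (g j).

Lemma stepA T g : AllLeafS g -> HN T g ->
  exists T', ra_step T T' /\ CT T' g < CT T g.
Proof.
elim: T g => [|l _ r IH] g hg //=.
case E: (isnode (build l g)) => /=.
  case: l E => [/=|a b] E _; first by move: (hg 0); rewrite E.
  exists (Node a (Node b r)); split; first by apply: RAroot; constructor.
  rewrite build_Node in E; rewrite /CT -/CT !build_Node (mk_node E) /= !sh_sh; lia.
move=> hr; have [r' [h1 h2]] := IH (sh g (leaves l)) (fun j => hg _) hr.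
exists (Node l r'); split; first exact: RAright.
rewrite /=; lia.
Qed.

Lemma w_split r r' s2 s' : nseq r' false ++ s2 = nseq r false ++ true :: s' ->
  w s2 = 0 -> s2 = true :: s'.
Proof.
elim: r' r => [|r' IH] [|r] //=; first by move=> ->.
by case=> /IH.
Qed.

Lemma Nxt_sh g a : Nxt g -> Nxt (sh g a).
Proof. move=> hn j k q v h; rewrite /sh addnS; exact: hn h. Qed.

Lemma stepB T g : AllLeafS g -> Nxt g ->
  (forall j, nodes T <= j -> exists k, g j = LLeaf k [::]) ->
  ~~ HN T g -> 0 < CT T g ->
  exists T', ra_step T T' /\ CT T' g < CT T g.
Proof.
elim: T g => [|l _ r IH] g hg hn ht //=.
rewrite negb_or => /andP[hl hr] hc.
case: (posnP (CT r (sh g (leaves l)))) => hcr; last first.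
  have ht' : forall j, nodes r <= j -> exists k, sh g (leaves l) j = LLeaf k [::].
    by move=> j hj; apply: ht; rewrite leaves_nodes /=; lia.
  have [r' [h1 h2]] := IH (sh g (leaves l)) (fun j => hg _) (@Nxt_sh g (leaves l) hn) ht' hr hcr.
  exists (Node l r'); split; first exact: RAright.
  rewrite /=; lia.
have [k [s ebl]] := leaf_of hl.
rewrite hcr ebl /= addn0 in hc.
case: s ebl hc => [|[] s'] ebl //= _.
have hL := leaves_gt0 l.
have [q hq] := build_last ebl.
have [r1 hr1] := hn _ _ _ _ hq.
have e1 : (leaves l).-1.+1 = leaves l by lia.
rewrite e1 in hr1.
case: r IH hr hcr ht => [|l' r''] IH hr hcr ht.
  have hle : nodes (Node l Leaf) <= leaves l by rewrite leaves_nodes /=; lia.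
  have [k' hk'] := ht (leaves l) hle.
  by rewrite hk' in hr1; case: hr1 => _ /esym; case: r1.
move: hr hcr; rewrite /HN -/HN /CT -/CT negb_or => /andP[hl' _] hcr.
have [k2 [s2 e2]] := leaf_of hl'.
have hw : w s2 = 0 by move: hcr; rewrite e2 /=; lia.
have [r2 hr2] := build_first e2.
rewrite /sh addn0 hr1 in hr2; case: hr2 => ek2 hs2.
subst k2; have es2 := w_split (esym hs2) hw; subst s2.
exists (Node (Node l l') r''); split; first by apply: RAroot; constructor.
rewrite /CT -/CT build_Node ebl e2 /mk /= !eqxx /= sh_sh.
move: hcr; rewrite e2 /= sh_sh; lia.
Qed.

Lemma w_nil a b s : nseq a false ++ s = nseq b false ++ [::] -> w s = 0 -> s = [::].
Proof.
elim: a b => [|a IH] [|b] //=; first by rewrite cats0 => ->.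
by case=> /IH.
Qed.

Lemma zeroCT T T1 m g : (forall j, g j = YF T1 m j) -> CT T g = 0 ->
  nodes T = nodes T1 -> T = T1.
Proof.
elim: T T1 m g => [|l _ r IH] [|l1 r1] m g hg //=.
have hl1 := leaves_gt0 l1; have hl := leaves_gt0 l.
move=> hc hn.
have hc1 : c (build l g) = 0 by lia.
have hc2 : CT r (sh g (leaves l)) = 0 by lia.
have [k [s eb]] : exists k s, build l g = LLeaf k s.
  by case: (build l g) hc1 => // k s _; exists k, s.
have hw : w s = 0 by rewrite eb in hc1.
have [a ha] := build_first eb.
have [b hb] := lab_first l1 m [::].
rewrite hg /= hl1 hb in ha; case: ha => ek hs; subst k.
have es := w_nil (esym hs) hw; subst s.
have ell : leaves l = leaves l1.
  case: (ltngtP (leaves l) (leaves l1)) => // h.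
  - have [q hq] := build_last eb.
    rewrite hg /= (_ : (leaves l).-1 < leaves l1) in hq; last by lia.
    have hlt : ((leaves l).-1).+1 < leaves l1 by lia.
    have [q' [v hv]] := lab_mid m [::] hlt.
    rewrite hv in hq; case: hq; rewrite cats0 => /esym h'; case: (nseq_true_nofalse h').
  - have [p hp] := build_all eb h.
    rewrite hg /= ltnn subnn in hp.
    by have := YF_idx hp; lia.
have el : l = l1.
  apply: build_uniq eb _ ell => j hj; by rewrite hg /= hj.
subst l1; congr Node; apply: (IH r1 m.+1 (sh g (leaves l))) => //; last by lia.
by move=> j; rewrite /sh hg /= (_ : leaves l + j < leaves l = false) ?addKn //; lia.
Qed.

Lemma descent T1 : forall N T, CT T (YF T1 0) <= N -> nodes T = nodes T1 ->
  exists k, k <= CT T (YF T1 0) /\ ra_path k T T1.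
Proof.
have hY : AllLeafS (YF T1 0) by move=> j; have [k [s ->]] := YF_leaf T1 0 j.
have hN : Nxt (YF T1 0) := @Nxt_YF T1 0.
elim=> [|N IH] T hc hn.
  have e : CT T (YF T1 0) = 0 by lia.
  rewrite (zeroCT (fun j => erefl) e hn); exists 0; split => //; exact: RAP0.
case: (posnP (CT T (YF T1 0))) => h0.
  rewrite (zeroCT (fun j => erefl) h0 hn); exists 0; split => //; exact: RAP0.
have [T' [hs hlt]] : exists T', ra_step T T' /\ CT T' (YF T1 0) < CT T (YF T1 0).
  case E: (HN T (YF T1 0)); first exact: stepA.
  apply: stepB => //; last by rewrite E.
  by move=> j hj; apply: YF_tail; lia.
have hc' : CT T' (YF T1 0) <= N by lia.
have hn' : nodes T' = nodes T1 by rewrite (ra_step_nodes hs).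
have [k [hk hp]] := IH T' hc' hn'.
exists k.+1; split; [lia | exact: RAPS hs hp].
Qed.

Theorem proposition3p7 (n : nat) (T1 T2 : tree) :
  nodes T1 = n -> nodes T2 = n ->
  exists d : nat, ra_dist_is T1 T2 d /\ wlen_is (tpd_word T1 T2) d.
Proof.
move=> h1 h2.
set w := tpd_word T1 T2.
have hY : act (winv (PT T1 0)) x0 = (YF T1 0).
  have e : act (PT T1 0) (YF T1 0) = x0.
    rewrite act_PT (@PS_YF T1 0 0 (YF T1 0)) //.
    by apply: functional_extensionality => j; rewrite /x0 subn0.
  by rewrite -e winv_act // => j; have [k [s ->]] := YF_leaf T1 0 j.
have hw : act w x0 = PS T2 0 (YF T1 0) by rewrite /w tpd_split act_cat hY act_PT.
have hlow : forall u, feq u w -> CT T2 (YF T1 0) <= size u.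
  move=> u hu; have [M [hM hD]] := lower_word hu.
  rewrite hw in hM hD.
  have ht : triv (PS T2 0 (YF T1 0)) (arm T2).
    move=> j hj; rewrite PS_high; last by lia.
    have hle : nodes T1 <= j + nodes T2 - arm T2 by have := arm_nodes T2; lia.
    by have [k ->] := YF_tail 0 hle.
  have e1 := DN_stab hM (leq_maxl M (arm T2)).
  have e2 := DN_stab ht (leq_maxr M (arm T2)).
  have := DN_PS T2 0 (YF T1 0); rewrite add0n /= => e3.
  have e4 : sh (YF T1 0) 0 = (YF T1 0) by apply: functional_extensionality.
  rewrite e4 in e3; lia.
have [k [hk hp]] := descent (leqnn _) (etrans h2 (esym h1)).
have hp' := ra_path_rev hp.
have hword : forall k' , ra_path k' T1 T2 -> exists A, size A = k' /\ feq A w.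
  move=> k' hp1; have [A [hA hf]] := path_feq hp1.
  exists A; split => //; apply: feq_sym; rewrite /w tpd_split.
  apply: feq_trans (feq_catr _ hf) _; rewrite -catA.
  by have := feq_catl A (feq_winv (PT T1 0)); rewrite cats0.
have [A [hA hAw]] := hword k hp'.
have ekd : k = CT T2 (YF T1 0) by have := hlow A hAw; lia.
exists (CT T2 (YF T1 0)); split; split.
- by rewrite -ekd.
- move=> k' hk'; have [A' [hA' hf']] := hword k' hk'; rewrite -hA'; exact: hlow.
- by exists A; rewrite hA.
- exact: hlow.
Qed.
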